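(* For every nonempty input word $u\in\{0,1,2\}^k$ ($k\ge 1$), the word $\mathcal{T}(u)\cdot\mathcal{T}_{\downarrow}(u)\in\{0,1\}^{k+2}$ satisfies \[ \mathrm{val}_{\mathcal{F}c}(u)=\mathrm{val}_{\mathcal{F}c}\big(\mathcal{T}(u)\cdot\mathcal{T}_{\downarrow}(u)\big). \]
   Context: Fibonacci numbers: $F_0=1$, $F_1=2$, $F_n=F_{n-1}+F_{n-2}$ for all $n\ge2$. For a word $w=w_{k-1}w_{k-2}\cdots w_0$ over $\{0,1,2\}$ (digits indexed from the right, $w_0$ the last letter), $\mathrm{val}_{\mathcal{F}}(w)=\sum_{i=0}^{k-1}w_iF_i$ (so $\mathrm{val}_{\mathcal F}(\varepsilon)=0$), and for nonempty $w$ of length $k$, $\mathrm{val}_{\mathcal{F}c}(w)=\sum_{i=0}^{k-1}w_iF_i-w_{k-1}F_k$. A Mealy machine reads an input word $u=u_0u_1\cdots u_{k-1}$ from left to right starting in its initial state; each transition $p\xrightarrow{a/b}q$ reads input letter $a$, outputs the (possibly empty) word $b$ and moves to state $q$. $M(u)$ denotes the concatenation of the outputs, and $M_{\downarrow}(u)$ denotes the extra output word attached to the state reached after reading $u$. The Berstel adder $\mathcal{B}$ has the 10 states $000.0,\ 001.1,\ 001.2,\ 010.3,\ 010.4,\ 100.5,\ 100.6,\ 101.6,\ 101.7,\ 000.1$, initial state $000.0$, and the 30 transitions (written state: input/output $\to$ next state): $000.0$: $0/0\to000.0$, $1/0\to001.2$, $2/0\to010.4$; $001.2$: $0/0\to010.3$,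 $1/0\to100.5$, $2/0\to101.7$; $010.4$: $0/0\to101.6$, $1/1\to000.0$, $2/1\to001.2$; $010.3$: $0/0\to100.5$, $1/0\to101.7$, $2/1\to000.1$; $100.5$: $0/1\to000.0$, $1/1\to001.2$, $2/1\to010.4$; $101.7$: $0/1\to010.3$, $1/1\to100.5$, $2/1\to101.7$; $101.6$: $0/1\to001.2$, $1/1\to010.4$, $2/1\to100.6$; $000.1$: $0/0\to001.1$, $1/0\to010.3$, $2/0\to100.5$; $100.6$: $0/1\to001.1$, $1/1\to010.3$, $2/1\to100.5$; $001.1$: $0/0\to001.2$, $1/0\to010.4$, $2/0\to100.6$. The extra output word of a state $xyz.j$ is the three-letter binary word $xyz$. The machine $\mathcal{T}$ is obtained from $\mathcal{B}$ by adding a new state $\mathtt{start}$, which becomes the initial state, with the three transitions $\mathtt{start}\xrightarrow{0/\varepsilon}000.0$, $\mathtt{start}\xrightarrow{1/\varepsilon}101.7$, $\mathtt{start}\xrightarrow{2/\varepsilon}100.6$ (empty output), and with extra output word $000$ at $\mathtt{start}$; all other states, transitions and extra outputs are as in $\mathcal{B}$. *)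

(* Defs.v *)
From Stdlib Require Import List ZArith.
Import ListNotations.
Open Scope Z_scope.

Inductive letter := L0 | L1 | L2.

Definition lval (a : letter) : Z :=
  match a with L0 => 0 | L1 => 1 | L2 => 2 end.

Fixpoint Fib (n : nat) : Z :=
  match n with
  | O => 1
  | S O => 2
  | S ((S m) as p) => Fib p + Fib m
  end.

(* A list [a; ...] is the word in reading order (leftmost letter first).
   The leftmost letter of a word of length k is w_{k-1}, the last one w_0.
   valF w = sum_{i<k} w_i F_i. *)
Fixpoint valF (w : list letter) : Z :=
  match w with
  | [] => 0
  | a :: w' => lval a * Fib (length w') + valF w'
  end.

Definition valFc (w : list letter) : Z :=
  match w with
  | [] => 0
  | a :: _ => valF w - lval a * Fib (length w)
  end.

(* States of the machine T: the ten states of the Berstel adder plus start. *)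
Inductive state :=
  | S000_0 | S001_1 | S001_2 | S010_3 | S010_4
  | S100_5 | S100_6 | S101_6 | S101_7 | S000_1 | Start.

Definition step (q : state) (a : letter) : list letter * state :=
  match q, a with
  | S000_0, L0 => ([L0], S000_0)
  | S000_0, L1 => ([L0], S001_2)
  | S000_0, L2 => ([L0], S010_4)
  | S001_2, L0 => ([L0], S010_3)
  | S001_2, L1 => ([L0], S100_5)
  | S001_2, L2 => ([L0], S101_7)
  | S010_4, L0 => ([L0], S101_6)
  | S010_4, L1 => ([L1], S000_0)
  | S010_4, L2 => ([L1], S001_2)
  | S010_3, L0 => ([L0], S100_5)
  | S010_3, L1 => ([L0], S101_7)
  | S010_3, L2 => ([L1], S000_1)
  | S100_5, L0 => ([L1], S000_0)
  | S100_5, L1 => ([L1], S001_2)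
  | S100_5, L2 => ([L1], S010_4)
  | S101_7, L0 => ([L1], S010_3)
  | S101_7, L1 => ([L1], S100_5)
  | S101_7, L2 => ([L1], S101_7)
  | S101_6, L0 => ([L1], S001_2)
  | S101_6, L1 => ([L1], S010_4)
  | S101_6, L2 => ([L1], S100_6)
  | S000_1, L0 => ([L0], S001_1)
  | S000_1, L1 => ([L0], S010_3)
  | S000_1, L2 => ([L0], S100_5)
  | S100_6, L0 => ([L1], S001_1)
  | S100_6, L1 => ([L1], S010_3)
  | S100_6, L2 => ([L1], S100_5)
  | S001_1, L0 => ([L0], S001_2)
  | S001_1, L1 => ([L0], S010_4)
  | S001_1, L2 => ([L0], S100_6)
  | Start, L0 => ([], S000_0)
  | Start, L1 => ([], S101_7)
  | Start, L2 => ([], S100_6)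
  end.

Definition extra (q : state) : list letter :=
  match q with
  | S000_0 | S000_1 | Start => [L0; L0; L0]
  | S001_1 | S001_2 => [L0; L0; L1]
  | S010_3 | S010_4 => [L0; L1; L0]
  | S100_5 | S100_6 => [L1; L0; L0]
  | S101_6 | S101_7 => [L1; L0; L1]
  end.

Fixpoint run (q : state) (u : list letter) : list letter * state :=
  match u with
  | [] => ([], q)
  | a :: u' =>
      let (o, q') := step q a in
      let (o', qf) := run q' u' in (o ++ o', qf)
  end.

Definition T_out (u : list letter) : list letter := fst (run Start u).
Definition T_down (u : list letter) : list letter := extra (snd (run Start u)).

(* Main.v *)
Require Import Defs.
From Stdlib Require Import List ZArith Lia.
Import ListNotations.
Open Scope Z_scope.

Definition E (s : Z*Z) (a : letter) : Z*Z := (fst s + snd s + lval a, fst s + lval a).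
Definition P (w : list letter) : Z*Z := fold_left E w (0,0).

Definition dq (q : state) : Z :=
  match q with
  | S010_4 | S000_1 | S100_6 => 1
  | S101_6 | S001_1 => -1
  | _ => 0
  end.
Definition addc (s : Z*Z) (q : state) : Z*Z := (fst s, snd s + dq q).

Definition Fp (n : nat) : Z := match n with O => 1 | S m => Fib m end.

Lemma Fib_S n : Fib (S n) = Fib n + Fp n.
Proof. destruct n; simpl; [reflexivity| ]. destruct n; reflexivity. Qed.

Fixpoint valFp (w : list letter) : Z :=
  match w with
  | [] => 0
  | a :: w' => lval a * Fp (length w') + valFp w'
  end.

Lemma foldE w : forall x y,
  fold_left E w (x,y) =
  (x * Fp (length w) + y * (Fib (length w) - Fp (length w)) + valF w,
   x * (Fib (length w) - Fp (length w)) + y * (2 * Fp (length w) - Fib (length w)) + valFp w).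
Proof.
  induction w as [|c w IH]; intros x y.
  - simpl. f_equal; ring.
  - simpl fold_left. unfold E at 2. simpl fst; simpl snd. rewrite IH.
    simpl length. simpl valF. simpl valFp.
    change (Fp (S (length w))) with (Fib (length w)).
    rewrite Fib_S. f_equal; ring.
Qed.

Lemma step_spec q a : q <> Start -> exists b q',
  step q a = ([b], q') /\ q' <> Start /\ b <> L2 /\
  forall s, E (addc (fold_left E (extra q) s) q) a = addc (fold_left E (extra q') (E s b)) q'.
Proof.
  intro Hq; destruct q; try congruence; destruct a;
  (eexists; eexists; split; [reflexivity|]; split; [discriminate|]; split; [discriminate|];
   intros [x y]; unfold E, addc; simpl; f_equal; ring).
Qed.

Lemma key v : forall q p, q <> Start ->
  fold_left E v (addc (P (p ++ extra q)) q) =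
  addc (P (p ++ fst (run q v) ++ extra (snd (run q v)))) (snd (run q v)).
Proof.
  induction v as [|a v IH]; intros q p Hq.
  - reflexivity.
  - destruct (step_spec q a Hq) as (b & q' & Hs & Hq' & _ & Hf).
    simpl run. rewrite Hs.
    specialize (IH q' (p ++ [b]) Hq').
    destruct (run q' v) as [o' qf] eqn:Hr. simpl fst in *; simpl snd in *.
    simpl fold_left. unfold P in *. rewrite fold_left_app, Hf.
    rewrite !fold_left_app in IH. simpl in IH. rewrite IH.
    rewrite !fold_left_app. simpl. reflexivity.
Qed.

Lemma run_len v : forall q, q <> Start ->
  length (fst (run q v)) = length v /\ Forall (fun b => b <> L2) (fst (run q v)).
Proof.
  induction v as [|a v IH]; intros q Hq.
  - simpl; auto.
  - destruct (step_spec q a Hq) as (b & q' & Hs & Hq' & Hb & _).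
    simpl run. rewrite Hs. destruct (IH q' Hq') as [H1 H2].
    destruct (run q' v) as [o' qf]. simpl in *. split; auto.
Qed.

Lemma extra_ok q : Forall (fun b => b <> L2) (extra q).
Proof. destruct q; simpl; repeat constructor; discriminate. Qed.

Lemma run_cons q a v : run q (a :: v) =
  let (o, q') := step q a in let (o', qf) := run q' v in (o ++ o', qf).
Proof. reflexivity. Qed.

Theorem mainTheorem1 (u : list letter) :
  u <> [] ->
  length (T_out u ++ T_down u) = (length u + 2)%nat /\
  Forall (fun b => b <> L2) (T_out u ++ T_down u) /\
  valFc u = valFc (T_out u ++ T_down u).
Proof.
  destruct u as [|a v]; [congruence|]. intros _.
  assert (H0 : exists q0, step Start a = ([], q0) /\ q0 <> Start /\
     addc (P (extra q0)) q0 = match a with L0 => (0,0) | L1 => (4,3) | L2 => (3,3) end)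
    by (destruct a; eexists; (split; [reflexivity|split; [discriminate|reflexivity]])).
  destruct H0 as (q0 & Hs & Hq0 & Hc).
  unfold T_out, T_down. rewrite run_cons, Hs.
  pose proof (key v q0 [] Hq0) as K. simpl app in K. rewrite Hc in K.
  destruct (run_len v q0 Hq0) as [L F].
  destruct (run q0 v) as [o qf] eqn:Hr. simpl fst in *; simpl snd in *. simpl app.
  split; [|split].
  - rewrite length_app, L. destruct qf; simpl; lia.
  - apply Forall_app; split; auto using extra_ok.
  - 
    assert (HW : fst (P (o ++ extra qf)) = valF (o ++ extra qf)).
    { unfold P. rewrite foldE. simpl. ring. }
    assert (HV : valF (o ++ extra qf) =
       match a with L0 => 0 | L1 => 4 | L2 => 3 end * Fp (length v) +
       match a with L0 => 0 | L1 => 3 | L2 => 3 end * (Fib (length v) - Fp (length v)) + valF v).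
    { rewrite <- HW. unfold addc in K. destruct a; rewrite foldE in K; apply (f_equal fst) in K; cbn [fst addc] in K; rewrite <- K; ring. }
    assert (Htop : exists w, o ++ extra qf = (match a with L0 => L0 | _ => L1 end) :: w).
    { destruct v as [|c v'].
      - simpl in Hr. inversion Hr; subst. destruct a; simpl in Hs; inversion Hs; subst; simpl; eauto.
      - simpl in Hr. destruct a; simpl in Hs; inversion Hs; subst;
        destruct c; simpl in Hr; destruct (run _ v') in Hr; inversion Hr; subst; simpl; eauto. }
    destruct Htop as [w Hw].
    assert (Hlw : length w = (length v + 2)%nat).
    { apply (f_equal (@length letter)) in Hw. rewrite length_app, L in Hw. simpl in Hw.
      destruct qf; simpl in Hw; lia. }
    assert (HV2 : valF (match a with L0 => L0 | _ => L1 end :: w) = valF (o ++ extra qf)) by (rewrite Hw; reflexivity).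
    rewrite HV in HV2.
    unfold valFc. rewrite Hw. cbv zeta. rewrite HV2.
    simpl length. rewrite Hlw.
    replace (S (length v + 2)) with (S (S (S (length v)))) by lia.
    simpl valF. rewrite !Fib_S. simpl Fp. rewrite ?Fib_S. destruct a; simpl lval; (destruct (length v) as [|m]; [cbn [Fib Fp]; ring | simpl Fp; cbv iota beta; ring]).
Qed.
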